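(* In the two-bus model of the context, let $\Omega$ be the set of all instances $\boldsymbol\omega=(\overline{\mathbf q},\mathbf d)$ with $\overline{\mathbf q},\mathbf d\ge 0$, $d_1+d_2>0$, that are feasible for both \textsf{ED-2b} and \textsf{SCED-2b}. Then $$\mathsf{PoS}:=\sup_{\boldsymbol\omega\in\Omega}\mathsf{PoS}(\boldsymbol\omega)=\frac{\alpha_2}{\alpha_1}-\frac{(\alpha_2-\alpha_1)f^{\mathsf{sc}}}{\alpha_1 f^{\mathsf{ed}}},$$ and this value is attained by any instance with $d_1=0$, $d_2=f^{\mathsf{ed}}$, $\overline q_1\ge f^{\mathsf{ed}}$, and $\overline q_2\ge f^{\mathsf{ed}}-f^{\mathsf{sc}}$.
   Context: Two-bus network: buses $v_1,v_2$ joined by two parallel lines $e_1,e_2$ with susceptances $B_1,B_2>0$ and thermal limits $\overline f_1,\overline f_2>0$. Bus $i\in\{1,2\}$ has a generator with capacity $\overline q_i\ge 0$ and linear cost $\alpha_i q_i$, and a demand $d_i\ge 0$; throughout $0<\alpha_1\le\alpha_2$ (bus 1 is the cheap bus). An instance is $\boldsymbol\omega=(\overline{\mathbf q},\mathbf d)$ with $\overline{\mathbf q}=(\overline q_1,\overline q_2)$, $\mathbf d=(d_1,d_2)$. Define $f^{\mathsf{ed}}:=(B_1+B_2)\min\{\overline f_1/B_1,\overline f_2/B_2\}$ and $f^{\mathsf{sc}}:=\min\{\overline f_1,\overline f_2\}$ (note $f^{\mathsf{sc}}\le f^{\mathsf{ed}}$). The economic dispatch problem \textsf{ED-2b} is: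 minimize $\alpha_1q_1+\alpha_2q_2$ over $(q_1,q_2)$ subject to $0\le q_1\le\overline q_1$, $0\le q_2\le\overline q_2$, $q_1+q_2=d_1+d_2$, and $-f^{\mathsf{ed}}\le q_1-d_1\le f^{\mathsf{ed}}$. The security-constrained problem \textsf{SCED-2b} is the same problem with the additional constraint $-f^{\mathsf{sc}}\le q_1-d_1\le f^{\mathsf{sc}}$. Let $c^\star_{\mathsf{ed}}(\boldsymbol\omega)$ and $c^\star_{\mathsf{sc}}(\boldsymbol\omega)$ be the optimal values of \textsf{ED-2b} and \textsf{SCED-2b} for an instance $\boldsymbol\omega$ feasible for both. The price of security of $\boldsymbol\omega$ is $\mathsf{PoS}(\boldsymbol\omega):=c^\star_{\mathsf{sc}}(\boldsymbol\omega)/c^\star_{\mathsf{ed}}(\boldsymbol\omega)$. *)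

(* Defs.v *)
From Stdlib Require Import Reals Lra.
Open Scope R_scope.

Definition f_ed (B1 B2 fb1 fb2 : R) : R := (B1 + B2) * Rmin (fb1 / B1) (fb2 / B2).
Definition f_sc (fb1 fb2 : R) : R := Rmin fb1 fb2.

Definition cost (a1 a2 q1 q2 : R) : R := a1 * q1 + a2 * q2.

Definition ed_feasible (fed qb1 qb2 d1 d2 q1 q2 : R) : Prop :=
  0 <= q1 <= qb1 /\ 0 <= q2 <= qb2 /\ q1 + q2 = d1 + d2 /\
  - fed <= q1 - d1 <= fed.

Definition sced_feasible (fed fsc qb1 qb2 d1 d2 q1 q2 : R) : Prop :=
  ed_feasible fed qb1 qb2 d1 d2 q1 q2 /\ - fsc <= q1 - d1 <= fsc.

Definition is_opt_value (feas : R -> R -> Prop) (cst : R -> R -> R) (c : R) : Prop :=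
  (exists q1 q2, feas q1 q2 /\ cst q1 q2 = c) /\
  (forall q1 q2, feas q1 q2 -> c <= cst q1 q2).

Definition is_feasible (feas : R -> R -> Prop) : Prop := exists q1 q2, feas q1 q2.

Definition in_Omega (fed fsc qb1 qb2 d1 d2 : R) : Prop :=
  0 <= qb1 /\ 0 <= qb2 /\ 0 <= d1 /\ 0 <= d2 /\ d1 + d2 > 0 /\
  is_feasible (ed_feasible fed qb1 qb2 d1 d2) /\
  is_feasible (sced_feasible fed fsc qb1 qb2 d1 d2).

Definition PoS_is (a1 a2 fed fsc qb1 qb2 d1 d2 p : R) : Prop :=
  exists csc ced,
    is_opt_value (sced_feasible fed fsc qb1 qb2 d1 d2) (cost a1 a2) csc /\
    is_opt_value (ed_feasible fed qb1 qb2 d1 d2) (cost a1 a2) ced /\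
    p = csc / ced.

(* Main.v *)
Require Import Defs.
From Stdlib Require Import Reals Lra Psatz.
Open Scope R_scope.

Lemma FS_facts (B1 B2 fb1 fb2 : R) :
  0 < B1 -> 0 < B2 -> 0 < fb1 -> 0 < fb2 ->
  0 < f_sc fb1 fb2 /\ f_sc fb1 fb2 <= f_ed B1 B2 fb1 fb2.
Proof.
  intros h1 h2 h3 h4. unfold f_sc, f_ed.
  split. { unfold Rmin; destruct (Rle_dec fb1 fb2); lra. }
  unfold Rmin at 2; destruct (Rle_dec (fb1/B1) (fb2/B2)) as [h|h].
  - assert (E : (B1+B2)*(fb1/B1) = fb1 + B2*(fb1/B1)) by (field; lra).
    rewrite E. assert (0 <= B2*(fb1/B1)).
    { apply Rmult_le_pos; [lra| unfold Rdiv; apply Rmult_le_pos; [lra|left; apply Rinv_0_lt_compat; lra]]. }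
    pose proof (Rmin_l fb1 fb2). lra.
  - assert (E : (B1+B2)*(fb2/B2) = fb2 + B1*(fb2/B2)) by (field; lra).
    rewrite E. assert (0 <= B1*(fb2/B2)).
    { apply Rmult_le_pos; [lra| unfold Rdiv; apply Rmult_le_pos; [lra|left; apply Rinv_0_lt_compat; lra]]. }
    pose proof (Rmin_r fb1 fb2). lra.
Qed.

Lemma attain (F S a1 a2 qb1 qb2 : R) :
  0 < S -> S <= F -> 0 < a1 -> a1 <= a2 -> F <= qb1 -> F - S <= qb2 ->
  in_Omega F S qb1 qb2 0 F /\
  PoS_is a1 a2 F S qb1 qb2 0 F (a2 / a1 - (a2 - a1) * S / (a1 * F)).
Proof.
  intros hS hSF ha1 ha12 hq1 hq2. split.
  - unfold in_Omega, is_feasible. repeat split; try lra.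
    + exists F, 0. unfold ed_feasible; repeat split; lra.
    + exists S, (F - S). unfold sced_feasible, ed_feasible; repeat split; lra.
  - exists (a1*S + a2*(F-S)), (a1*F). split; [|split].
    + split.
      * exists S, (F-S). split; [unfold sced_feasible, ed_feasible; repeat split; lra|].
        unfold cost; ring.
      * intros q1 q2 [[h1 [h2 [h3 h4]]] h5]. unfold cost.
        assert (q2 = F - q1) by lra. subst q2. nra.
    + split.
      * exists F, 0. split; [unfold ed_feasible; repeat split; lra|]. unfold cost; ring.
      * intros q1 q2 [h1 [h2 [h3 h4]]]. unfold cost.
        assert (q2 = F - q1) by lra. subst q2. nra.
    + field. lra.
Qed.

Lemma bound (F S a1 a2 qb1 qb2 d1 d2 p : R) :
  0 < S -> S <= F -> 0 < a1 -> a1 <= a2 ->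
  in_Omega F S qb1 qb2 d1 d2 -> PoS_is a1 a2 F S qb1 qb2 d1 d2 p ->
  p <= a2 / a1 - (a2 - a1) * S / (a1 * F).
Proof.
  intros hS hSF ha1 ha12 [hqb1 [hqb2 [hd1 [hd2 [hD [_ [z1 [z2 hz]]]]]]]]
    [csc [ced [[_ Hsc] [[[e1 [e2 [He Hce]]] _] Hp]]]].
  subst p. set (T := a2 / a1 - (a2 - a1) * S / (a1 * F)).
  assert (HT : T * (a1 * F) = a2 * F - (a2 - a1) * S) by (unfold T; field; lra).
  destruct He as [h1 [h2 [h3 h4]]].
  destruct hz as [[g1 [g2 [g3 g4]]] g5].
  unfold cost in Hce.
  assert (hced : 0 < ced) by nra.
  assert (T1 : 1 <= T).
  { assert (0 <= (a2 - a1) * (F - S)) by nra.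
    assert (a1 * F <= T * (a1 * F)) by lra.
    assert (0 < a1 * F) by nra. nra. }
  apply (Rmult_le_reg_r ced); auto.
  unfold Rdiv. rewrite Rmult_assoc, Rinv_l by lra. rewrite Rmult_1_r.
  destruct (Rle_dec (e1 - d1) S) as [hx|hx].
  - destruct (Rle_dec (- S) (e1 - d1)) as [hy|hy].
    + assert (csc <= cost a1 a2 e1 e2).
      { apply Hsc. unfold sced_feasible, ed_feasible; repeat split; lra. }
      unfold cost in *. assert (ced <= T * ced) by nra. lra.
    + assert (csc <= cost a1 a2 z1 z2) by (apply Hsc; unfold sced_feasible, ed_feasible; repeat split; lra).
      unfold cost in *. assert (z2 = d1 + d2 - z1) by lra. assert (e2 = d1 + d2 - e1) by lra.
      subst z2 e2.
      assert (0 <= (a2 - a1) * (z1 - e1)) by (apply Rmult_le_pos; lra).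
      assert (ced <= T * ced) by nra. lra.
  - assert (csc <= cost a1 a2 (d1 + S) (d2 - S)) by
      (apply Hsc; unfold sced_feasible, ed_feasible; repeat split; lra).
    unfold cost in *.
    set (x := e1 - d1). set (u := d2 - x). set (c := a2 - a1).
    assert (hu : 0 <= u) by (unfold u, x; lra).
    assert (hc : 0 <= c) by (unfold c; lra).
    assert (Ex : ced = a1 * (d1 + x) + a2 * u).
    { assert (e2 = u) by (unfold u, x; lra). rewrite <- H0. unfold x. lra. }
    assert (key : a1 * F * (a1 * (d1 + S) + a2 * (d2 - S)) <= (a2 * F - c * S) * ced).
    { assert (E : (a2 * F - c * S) * ced - a1 * F * (a1 * (d1 + S) + a2 * (d2 - S))
         = a1 * c * (F - S) * d1 + a2 * c * (F - S) * u + a1 * c * S * (F - x))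
        by (rewrite Ex; unfold u, c; ring).
      assert (0 <= a1 * c * (F - S) * d1) by (repeat apply Rmult_le_pos; lra).
      assert (0 <= a2 * c * (F - S) * u) by (repeat apply Rmult_le_pos; lra).
      assert (0 <= a1 * c * S * (F - x)) by (repeat apply Rmult_le_pos; unfold x; lra).
      lra. }
    assert (hF : 0 < a1 * F) by nra.
    apply (Rmult_le_reg_l (a1 * F)); auto.
    fold c in HT.
    replace (a1 * F * (T * ced)) with (T * (a1 * F) * ced) by ring. rewrite HT. nra.
Qed.

Theorem theorem1 (B1 B2 fb1 fb2 a1 a2 : R)
  (hB1 : 0 < B1) (hB2 : 0 < B2) (hf1 : 0 < fb1) (hf2 : 0 < fb2)
  (ha1 : 0 < a1) (ha12 : a1 <= a2) :
  is_lub
    (fun p => exists qb1 qb2 d1 d2,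
       in_Omega (f_ed B1 B2 fb1 fb2) (f_sc fb1 fb2) qb1 qb2 d1 d2 /\
       PoS_is a1 a2 (f_ed B1 B2 fb1 fb2) (f_sc fb1 fb2) qb1 qb2 d1 d2 p)
    (a2 / a1 - (a2 - a1) * f_sc fb1 fb2 / (a1 * f_ed B1 B2 fb1 fb2))
  /\
  (forall qb1 qb2 : R,
     f_ed B1 B2 fb1 fb2 <= qb1 ->
     f_ed B1 B2 fb1 fb2 - f_sc fb1 fb2 <= qb2 ->
     in_Omega (f_ed B1 B2 fb1 fb2) (f_sc fb1 fb2) qb1 qb2 0 (f_ed B1 B2 fb1 fb2) /\
     PoS_is a1 a2 (f_ed B1 B2 fb1 fb2) (f_sc fb1 fb2) qb1 qb2 0 (f_ed B1 B2 fb1 fb2)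
       (a2 / a1 - (a2 - a1) * f_sc fb1 fb2 / (a1 * f_ed B1 B2 fb1 fb2))).
Proof.
  destruct (FS_facts B1 B2 fb1 fb2 hB1 hB2 hf1 hf2) as [hS hSF].
  set (F := f_ed B1 B2 fb1 fb2) in *. set (S := f_sc fb1 fb2) in *.
  split.
  - split.
    + intros p [qb1 [qb2 [d1 [d2 [H1 H2]]]]]. eapply bound; eauto.
    + intros b Hb. apply Hb. exists F, F, 0, F.
      apply attain; lra.
  - intros qb1 qb2 h1 h2. apply attain; lra.
Qed.
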